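(* Let $A$ and $B$ be nonempty proper subsets of $R_n$. Let $d_A^{\perp}$ be the minimum distance of the dual of the cyclic code of length $n$ over $\mathbb{F}_{q^d}$ with complete defining set $A$, and let $d_B$ be the minimum distance of the cyclic code of length $n$ over $\mathbb{F}_{q^d}$ with complete defining set $B$, and suppose $d_A^{\perp}\ge d_B$. If $C$ is a cyclic code of length $n$ over $\mathbb{F}_q$ whose complete defining set contains $AB$, then $C$ has $(d_A^{\perp}-d_B+1,\,d_B)$-locality.
   Context: Let $q$ be a prime power and $n$ a positive integer with $\gcd(n,q)=1$. Let $d$ be the multiplicative order of $q$ modulo $n$, $\alpha\in\mathbb{F}_{q^d}$ a primitive $n$-th root of unity, and $R_n=\{\alpha^j:0\le j\le n-1\}$. For $A,B\subseteq R_n$, $AB=\{\beta\gamma:\beta\in A,\gamma\in B\}$. For any $Z\subseteq R_n$, the cyclic code of length $n$ over $\mathbb{F}_{q^d}$ with complete defining set $Z$ is the ideal generated by $\prod_{\beta\in Z}(x-\beta)$ in $\mathbb{F}_{q^d}[x]/(x^n-1)$, identified with a subspace of $\mathbb{F}_{q^d}^n$ via coefficient vectors. A cyclic code of length $n$ over $\mathbb{F}_q$ is an ideal $\langle g(x)\rangle$ of $\mathbb{F}_q[x]/(x^n-1)$ with $g\mid x^n-1$ monic; its complete defining set is the set of roots of $g$ in $R_n$. Locality: for a linear code $C\subseteq\mathbb{F}^n$ and integers $r\ge1$, $\delta\ge2$, the $i$-th coordinate has $(r,\delta)$-locality if there is $S_i\subseteq\{1,\dots,n\}$ with $i\in S_i$,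 $|S_i|\le r+\delta-1$ such that the punctured code $C|_{S_i}$ (restrictions of codewords to $S_i$) has minimum distance at least $\delta$ (the zero code having infinite minimum distance); $C$ has $(r,\delta)$-locality if every coordinate does. *)

(* Defs.v *)
From HB Require Import structures.
From mathcomp Require Import all_boot all_order all_algebra all_field.
Set Implicit Arguments.
Unset Strict Implicit.
Unset Printing Implicit Defensive.
Import GRing.Theory.
Local Open Scope ring_scope.

Definition is_mult_order (n q d : nat) : Prop :=
  (0 < d)%N /\ (q ^ d = 1 %[mod n])%N /\
  (forall k : nat, (0 < k)%N -> (q ^ k = 1 %[mod n])%N -> (d <= k)%N).

Definition poly_of_vec (K : fieldType) (n : nat) (c : 'rV[K]_n) : {poly K} :=
  \sum_(i < n) c 0 i *: 'X^i.

(* the ideal <g> of K[x]/(x^n - 1), identified with coefficient vectors *)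
Definition ideal_code (K : fieldType) (n : nat) (g : {poly K}) : 'rV[K]_n -> Prop :=
  fun c => exists f : {poly K}, poly_of_vec c = (f * g) %% ('X^n - 1).
Arguments ideal_code {K} n g.

(* prod_{beta in Z} (x - beta), where Z = {alpha^j : j in Z'} subset of R_n
   is encoded by its set of exponents Z' : {set 'I_n} *)
Definition defpoly (L : fieldType) (n : nat) (alpha : L) (Z : {set 'I_n}) : {poly L} :=
  \prod_(j in Z) ('X - (alpha ^+ j)%:P).

Definition cyclic_code_defset (L : fieldType) (n : nat) (alpha : L) (Z : {set 'I_n})
  : 'rV[L]_n -> Prop := ideal_code n (defpoly alpha Z).

Definition dual_code (K : fieldType) (n : nat) (C : 'rV[K]_n -> Prop) : 'rV[K]_n -> Prop :=
  fun y => forall c, C c -> \sum_(i < n) y 0 i * c 0 i = 0.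

Definition wt (K : fieldType) (n : nat) (c : 'rV[K]_n) : nat := #|[set i | c 0 i != 0]|.

Definition is_min_dist (K : fieldType) (n : nat) (C : 'rV[K]_n -> Prop) (d : nat) : Prop :=
  (exists c, [/\ C c, c != 0 & wt c = d]) /\
  (forall c, C c -> c != 0 -> (d <= wt c)%N).

(* (r, delta)-locality: every coordinate i has a set S containing i with
   |S| <= r + delta - 1 such that the punctured code C|_S has minimum distance
   >= delta (every nonzero restriction has weight >= delta; zero code ok). *)
Definition has_locality (K : fieldType) (n : nat) (C : 'rV[K]_n -> Prop) (r delta : nat)
  : Prop :=
  forall i : 'I_n, exists S : {set 'I_n},
    [/\ i \in S, (#|S| <= r + delta - 1)%N &
        forall c, C c -> [exists j in S, c ord0 j != 0%R] ->
          (delta <= #|[set j in S | c ord0 j != 0%R]|)%N].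

(* Main.v *)
Require Import Defs.
From HB Require Import structures.
From mathcomp Require Import all_boot all_order all_algebra all_field.
From mathcomp Require Import zify.
Import GRing.Theory.
Local Open Scope ring_scope.

Lemma pov_horner (K : fieldType) n (c : 'rV[K]_n) x :
  (poly_of_vec c).[x] = \sum_(i < n) c 0 i * x ^+ i.
Proof.
rewrite /poly_of_vec horner_sum; apply: eq_bigr => i _.
by rewrite hornerZ hornerXn.
Qed.

Lemma pov_size (K : fieldType) n (c : 'rV[K]_n) : (size (poly_of_vec c) <= n)%N.
Proof.
rewrite /poly_of_vec; apply: leq_trans (size_sum _ _ _) _.
apply/bigmax_leqP => i _.
apply: leq_trans (size_scale_leq _ _) _.
by rewrite size_polyXn.
Qed.

Lemma code_eval (L : fieldType) n (alpha : L) (Z : {set 'I_n}) (c : 'rV[L]_n) :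
  n.-primitive_root alpha ->
  cyclic_code_defset alpha Z c <->
  (forall a, a \in Z -> (poly_of_vec c).[alpha ^+ a] = 0).
Proof.
move=> pr; split.
  case=> f ->; move=> a aZ.
  have m0 : ('X^n - 1 : {poly L}).[alpha ^+ a] = 0.
    by rewrite hornerD hornerN hornerXn hornerC -exprM mulnC exprM
      (prim_expr_order pr) expr1n subrr.
  have -> : ((f * defpoly alpha Z) %% ('X^n - 1)).[alpha ^+ a] = (f * defpoly alpha Z).[alpha ^+ a].
    by rewrite [in RHS](divp_eq (f * defpoly alpha Z) ('X^n - 1)) hornerD hornerM m0 mulr0 add0r.
  rewrite hornerM /defpoly horner_prod (bigD1 a) //= hornerD hornerX hornerN hornerC.
  by rewrite subrr mul0r mulr0.
move=> H.
have dv : defpoly alpha Z %| poly_of_vec c.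
  rewrite /defpoly -big_enum /= -(big_map (fun j : 'I_n => alpha ^+ j) xpredT
     (fun z => 'X - z%:P)).
  apply: uniq_roots_dvdp.
    apply/allP => z /mapP [j]; rewrite mem_enum => jZ ->.
    by rewrite /root H.
  rewrite uniq_rootsE map_inj_in_uniq ?enum_uniq //.
  move=> i j _ _ /eqP; rewrite (eq_prim_root_expr pr) => /eqP.
  rewrite !modn_small ?ltn_ord // => /val_inj //.
exists (poly_of_vec c %/ defpoly alpha Z); rewrite divpK // modp_small //.
rewrite size_XnsubC ?ltnS ?pov_size //.
exact: prim_order_gt0 pr.
Qed.

Lemma ideal_eval (F : finFieldType) (L : fieldExtType F) n (g : {poly F}) (c : 'rV[F]_n) (x : L) :
  g %| 'X^n - 1 -> ideal_code n g c -> root (map_poly (in_alg L) g) x ->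
  \sum_(i < n) in_alg L (c 0 i) * x ^+ i = 0.
Proof.
move=> gd [f cf] rx.
have : g %| poly_of_vec c by rewrite cf -dvdp_mod // dvdp_mull.
case/dvdpP=> h hE.
have : (map_poly (in_alg L) (poly_of_vec c)).[x] = 0.
  by rewrite hE rmorphM /= hornerM (rootP rx) mulr0.
move=> E; apply: etrans E.
rewrite /poly_of_vec rmorph_sum horner_sum.
apply: eq_bigr => i _.
by rewrite /= map_polyZ map_polyXn hornerZ hornerXn.
Qed.
Arguments code_eval {L n alpha Z c}.
Arguments ideal_eval {F L n g c x}.
Lemma inalg_eq0 (F : finFieldType) (L : fieldExtType F) (x : F) : (in_alg L x == 0) = (x == 0).
Proof. by rewrite fmorph_eq0. Qed.

Theorem theorem3p3 (F : finFieldType) (L : fieldExtType F) (n d : nat) (alpha : L)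
    (A B : {set 'I_n}) (dA dB : nat) (g : {poly F}) :
  (0 < n)%N -> coprime n #|F| ->
  is_mult_order n #|F| d -> \dim {:L} = d ->
  n.-primitive_root alpha ->
  A != set0 -> A != setT -> B != set0 -> B != setT ->
  is_min_dist (dual_code (cyclic_code_defset alpha A)) dA ->
  is_min_dist (cyclic_code_defset alpha B) dB ->
  (dB <= dA)%N ->
  g \is monic -> g %| 'X^n - 1 ->
  (forall i j : 'I_n, i \in A -> j \in B ->
     root (map_poly (in_alg L) g) (alpha ^+ i * alpha ^+ j)) ->
  has_locality (ideal_code n g) (dA - dB + 1) dB.
Proof.
case: n A B => [|n] A B; first by [].
move=> _ _ _ _ pr _ _ _ _ [[y0 [y0d y0nz y0w]] _] [_ dBmin] dBA _ gd groot.
have [s ys] : exists s, y0 0 s != 0.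
  case: (pickP (fun s => y0 0 s != 0)) => [s ys|H]; first by exists s.
  case/eqP: y0nz; apply/rowP => j; rewrite mxE.
  by move: (H j) => /negbFE /eqP.
have pexp : forall (z : L) (m : nat), z ^+ n.+1 = 1 -> z ^+ (m %% n.+1) = z ^+ m.
  by move=> z m zn; rewrite expr_mod.
have aexp : forall a : 'I_n.+1, (alpha ^+ a) ^+ n.+1 = 1.
  by move=> a; rewrite -exprM mulnC exprM (prim_expr_order pr) expr1n.
move=> i.
pose t : 'I_n.+1 := s - i.
pose yr : 'rV[L]_n.+1 := \row_k y0 0 (k + t).
have yi : yr 0 i = y0 0 s by rewrite mxE /t addrC subrK.
have ydual : dual_code (cyclic_code_defset alpha A) yr.
  move=> c cA.
  pose c' : 'rV[L]_n.+1 := \row_m c 0 (m - t).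
  have c'A : cyclic_code_defset alpha A c'.
    apply/(code_eval pr) => a aA.
    have E := (proj1 (code_eval pr) cA) a aA; rewrite pov_horner in E.
    rewrite pov_horner (reindex_inj (addIr t)) /=.
    transitivity ((alpha ^+ a) ^+ t * \sum_(k < n.+1) c 0 k * (alpha ^+ a) ^+ k);
      last by rewrite E mulr0.
    rewrite mulr_sumr; apply: eq_bigr => k _; rewrite mxE addrK.
    rewrite pexp ?aexp // exprD mulrCA.
    by rewrite mulrCA [RHS]mulrCA; congr (_ * _); exact: mulrC.
  have := y0d _ c'A.
  rewrite (reindex_inj (addIr t)) /= => E; rewrite -[RHS]E.
  by apply: eq_bigr => k _; rewrite !mxE addrK.
exists [set k | yr 0 k != 0]; split.
- by rewrite inE yi.
- have -> : #|[set k | yr 0 k != 0]| = dA.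
    rewrite -y0w /wt -!sum1_card [RHS](reindex_inj (addIr t)) /=.
    by apply: eq_bigl => k; rewrite !inE mxE.
  lia.
move=> c cg /existsP [j /andP [jS cj]].
pose w : 'rV[L]_n.+1 := \row_k (yr 0 k * in_alg L (c 0 k)).
have wB : cyclic_code_defset alpha B w.
  apply/(code_eval pr) => b bB.
  pose v : 'rV[L]_n.+1 := \row_k (in_alg L (c 0 k) * (alpha ^+ b) ^+ k).
  have vA : cyclic_code_defset alpha A v.
    apply/(code_eval pr) => a aA.
    rewrite pov_horner -[RHS](ideal_eval gd cg (groot a b aA bB)).
    apply: eq_bigr => k _; rewrite mxE -mulrA -exprMn. by rewrite [alpha ^+ b * _]mulrC.
  rewrite pov_horner -[RHS](ydual _ vA).
  by apply: eq_bigr => k _; rewrite !mxE mulrA.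
have wnz : w != 0.
  apply/eqP => /rowP /(_ j); rewrite !mxE; apply/eqP.
  rewrite inE mxE in jS; by rewrite mulf_neq0 // inalg_eq0.
apply: leq_trans (dBmin _ wB wnz) _.
apply: subset_leq_card; apply/subsetP => k; rewrite !inE mxE mulf_eq0 negb_or.
by case/andP=> -> ; rewrite inalg_eq0.
Qed.
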